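(* Let $\mathcal E$ be an exchangeability system for a noncommutative probability space $(\mathcal A,\phi)$, let $X_1,\dots,X_n\in\mathcal A$, and for $i=1,\dots,m$ let $Y_i=\sum_{j=1}^n\alpha_{ij}X_j+\beta_i1$ with $\alpha_{ij},\beta_i\in\mathbb C$. If $m\ge2$, then $$K_m(Y_1,\dots,Y_m)=\sum_{j_1,\dots,j_m=1}^n\alpha_{1,j_1}\cdots\alpha_{m,j_m}K_m(X_{j_1},\dots,X_{j_m});$$ in particular it does not depend on the $\beta_i$. Likewise, for every $\pi\in\Pi_m$ having no singleton block, $K_\pi(Y_1,\dots,Y_m)=\sum_{j_1,\dots,j_m}\alpha_{1,j_1}\cdots\alpha_{m,j_m}K_\pi(X_{j_1},\dots,X_{j_m})$.
   Context: A noncommutative probability space is a pair $(\mathcal A,\phi)$ of a complex unital algebra $\mathcal A$ and a unital linear functional $\phi$. An exchangeability system $\mathcal E$ for $(\mathcal A,\phi)$ consists of a noncommutative probability space $(\mathcal U,\tilde\phi)$ and a family $(\iota_k)_{k\in\mathbb N}$ of embeddings (injective unital algebra homomorphisms) $\iota_k:\mathcal A\to\mathcal A_k\subseteq\mathcal U$ with $\tilde\phi\circ\iota_k=\phi$; write $X^{(k)}=\iota_k(X)$. It is required that for all $X_1,\dots,X_n\in\mathcal A$, all indices $i_1,\dots,i_n\in\mathbb N$ and every bijection $\sigma$ of $\mathbb N$, $\tilde\phi(X_1^{(i_1)}\cdots X_n^{(i_n)})=\tilde\phi(X_1^{(\sigma(i_1))}\cdots X_n^{(\sigma(i_n))})$;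 this value depends only on the kernel of $j\mapsto i_j$ and for a partition $\sigma$ of $[n]$ is denoted $\phi_\sigma(X_1,\dots,X_n)$. For a primitive $m$-th root of unity $\omega$, $K_m(Y_1,\dots,Y_m)=\frac1m\tilde\phi(Y_1^\omega\cdots Y_m^\omega)$ with $Y^\omega=\sum_{k=1}^m\omega^kY^{(k)}$. $\Pi_m$ is the lattice of set partitions of $[m]$ under refinement with Möbius function $\mu$, and $K_\pi(Y_1,\dots,Y_m)=\sum_{\sigma\le\pi}\phi_\sigma(Y_1,\dots,Y_m)\mu(\sigma,\pi)$. *)

(* Defs.v *)
(* Scalars: the complex numbers, realized as R[i] for a
   realType R (mathcomp-real-closed's complex numbers over the reals). *)
From HB Require Import structures.
From mathcomp Require Import all_boot all_order all_algebra.
From mathcomp Require Import reals complex.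
Set Implicit Arguments. Unset Strict Implicit. Unset Printing Implicit Defensive.
Import Order.TTheory GRing.Theory Num.Theory.
Local Open Scope ring_scope.

Section NCProb.
Variable C : fieldType.

Definition nc_prob_space (A : algType C) (phi : A -> C) : Prop :=
  (forall (a : C) (x y : A), phi (a *: x + y) = a * phi x + phi y) /\ phi 1 = 1.

Definition alg_embedding (A U : algType C) (f : A -> U) : Prop :=
  [/\ forall (a : C) (x y : A), f (a *: x + y) = a *: f x + f y,
      forall x y : A, f (x * y) = f x * f y,
      f 1 = 1
    & injective f].

Definition mixed_moment (A U : algType C) (tphi : U -> C)
  (iota : nat -> A -> U) (n : nat) (X : 'I_n -> A) (i : 'I_n -> nat) : C :=
  tphi (\prod_(j < n) iota (i j) (X j)).

(* Exchangeability system (U, tphi, (iota_k)_k) for (A, phi); the index set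
   N is represented by nat. *)
Definition exchangeability_system (A : algType C) (phi : A -> C)
  (U : algType C) (tphi : U -> C) (iota : nat -> A -> U) : Prop :=
  [/\ nc_prob_space tphi,
      forall k, alg_embedding (iota k),
      forall k (x : A), tphi (iota k x) = phi x
    & forall (n : nat) (X : 'I_n -> A) (i : 'I_n -> nat) (s : nat -> nat),
        bijective s ->
        mixed_moment tphi iota X i = mixed_moment tphi iota X (s \o i)].

Definition is_setpart (m : nat) (P : {set {set 'I_m}}) : bool :=
  partition P [set: 'I_m].

Definition refines (m : nat) (s p : {set {set 'I_m}}) : bool :=
  [forall B in s, [exists B' in p, B \subset B']].

Definition setpart (m : nat) := {P : {set {set 'I_m}} | is_setpart P}.

Definition zeta_mx (m : nat) : 'M[C]_#|{: setpart m}| :=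
  \matrix_(i, j) (refines (val (enum_val i)) (val (enum_val j)))%:R.

(* Moebius function of Pi_m: the inverse of zeta in the incidence algebra. *)
Definition moebius (m : nat) (s p : setpart m) : C :=
  invmx (zeta_mx m) (enum_rank s) (enum_rank p).

(* phi_sigma(X_1,...,X_n): the mixed moment with any index function of
   kernel sigma; we choose the one numbering the blocks of sigma. *)
Definition block_index (m : nat) (s : {set {set 'I_m}}) (j : 'I_m) : nat :=
  index (pblock s j) (enum s).

Definition phi_part (A U : algType C) (tphi : U -> C) (iota : nat -> A -> U)
  (m : nat) (s : {set {set 'I_m}}) (Y : 'I_m -> A) : C :=
  mixed_moment tphi iota Y (block_index s).

Definition omega_lift (A U : algType C) (iota : nat -> A -> U)
  (m : nat) (w : C) (Y : A) : U :=
  \sum_(1 <= k < m.+1) w ^+ k *: iota k Y.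

Definition K_omega (A U : algType C) (tphi : U -> C) (iota : nat -> A -> U)
  (m : nat) (w : C) (Y : 'I_m -> A) : C :=
  m%:R^-1 * tphi (\prod_(j < m) omega_lift iota m w (Y j)).

Definition K_part (A U : algType C) (tphi : U -> C) (iota : nat -> A -> U)
  (m : nat) (p : setpart m) (Y : 'I_m -> A) : C :=
  \sum_(s : setpart m | refines (val s) (val p))
     phi_part tphi iota (val s) Y * moebius s p.

End NCProb.

(* Main.v *)
Require Import Defs.
From HB Require Import structures.
From mathcomp Require Import all_boot all_order all_algebra.
From mathcomp Require Import reals complex.
From Stdlib Require Import FunctionalExtensionality.
Import Order.TTheory GRing.Theory Num.Theory.
Local Open Scope ring_scope.
Set Implicit Arguments. Unset Strict Implicit.

Section Part.
Variable m : nat.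
Implicit Types P Q : {set {set 'I_m}}.

Lemma part_cover P : is_setpart P -> cover P = setT.
Proof. by case/and3P=> /eqP. Qed.
Lemma part_triv P : is_setpart P -> trivIset P.
Proof. by case/and3P. Qed.
Lemma part_n0 P : is_setpart P -> set0 \notin P.
Proof. by case/and3P. Qed.

Lemma pb_mem P x : is_setpart P -> pblock P x \in P.
Proof. by move=> hP; apply: pblock_mem; rewrite part_cover. Qed.
Lemma pb_self P x : is_setpart P -> x \in pblock P x.
Proof. by move=> hP; rewrite mem_pblock part_cover. Qed.
Lemma pb_same P x y : is_setpart P -> y \in pblock P x -> pblock P y = pblock P x.
Proof. by move=> hP; apply: same_pblock; apply: part_triv. Qed.
Lemma pb_eq P x y : is_setpart P -> (pblock P x == pblock P y) = (y \in pblock P x).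
Proof. by move=> hP; apply: eq_pblock; [apply: part_triv | rewrite part_cover]. Qed.

Lemma pb_repr P B : is_setpart P -> B \in P -> exists x, B = pblock P x.
Proof.
move=> hP BP; have : B != set0 by apply: contraTneq BP => ->; apply: part_n0.
case/set0Pn=> x xB; exists x; symmetry; apply: def_pblock => //; exact: part_triv.
Qed.

Lemma refinesP P Q : is_setpart P -> is_setpart Q ->
  reflect (forall x, pblock P x \subset pblock Q x) (refines P Q).
Proof.
move=> hP hQ; apply: (iffP forall_inP).
  move=> H x; case/exists_inP: (H _ (pb_mem x hP)) => B' B'Q sub.
  have xB' : x \in B' by apply: (subsetP sub); apply: pb_self.
  by rewrite (def_pblock (part_triv hQ) B'Q xB').
move=> H B BP; case: (pb_repr hP BP) => x ->; apply/exists_inP.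
by exists (pblock Q x); [apply: pb_mem | apply: H].
Qed.

Lemma part_ext P Q : is_setpart P -> is_setpart Q ->
  (forall x, pblock P x = pblock Q x) -> P = Q.
Proof.
move=> hP hQ H; apply/setP => B; apply/idP/idP.
  by move=> BP; case: (pb_repr hP BP) => x ->; rewrite H pb_mem.
by move=> BQ; case: (pb_repr hQ BQ) => x ->; rewrite -H pb_mem.
Qed.

Definition of_fun (F : 'I_m -> {set 'I_m}) : {set {set 'I_m}} := [set F x | x in [set: 'I_m]].

Lemma of_fun_part (F : 'I_m -> {set 'I_m}) : (forall x, x \in F x) -> (forall x y, y \in F x -> F y = F x) ->
  is_setpart (of_fun F) /\ forall x, pblock (of_fun F) x = F x.
Proof.
move=> Fs Fe.
have triv : trivIset (of_fun F).
  apply/trivIsetP => A B /imsetP [x _ ->] /imsetP [y _ ->] neq.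
  apply/pred0P => z /=; apply/negP => /andP [zx zy].
  by move: neq; rewrite -(Fe _ _ zx) -(Fe _ _ zy) eqxx.
have pbF x : pblock (of_fun F) x = F x.
  by apply: def_pblock => //; apply/imsetP; exists x.
split=> //; apply/and3P; split => //.
  apply/eqP/setP => x; rewrite inE; apply/bigcupP; exists (F x) => //.
  by apply/imsetP; exists x.
apply/imsetP => [[x _ /setP /(_ x)]]; by rewrite inE Fs.
Qed.

Definition msr P := (\sum_x #|pblock P x|)%N.

Lemma msr_lt P Q : is_setpart P -> is_setpart Q -> refines P Q -> P != Q -> (msr P < msr Q)%N.
Proof.
move=> hP hQ /(refinesP hP hQ) H neq.
have := @leqif_sum _ xpredT (fun x => pblock Q x \subset pblock P x)
  (fun x => #|pblock P x|) (fun x => #|pblock Q x|) (fun x _ => subset_leqif_card (H x)).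
case=> le eq; rewrite /msr ltn_neqAle le eq andbT.
apply: contra neq => /forall_inP all; apply/eqP; apply: part_ext => // x.
by apply/eqP; rewrite eqEsubset H all.
Qed.

Lemma refines_refl P : is_setpart P -> refines P P.
Proof. by move=> hP; apply/refinesP. Qed.
Lemma refines_trans P Q S : is_setpart P -> is_setpart Q -> is_setpart S ->
  refines P Q -> refines Q S -> refines P S.
Proof.
move=> hP hQ hS /(refinesP hP hQ) h1 /(refinesP hQ hS) h2; apply/refinesP => // x.
exact: subset_trans (h1 x) (h2 x).
Qed.

Lemma part_ind (Q : setpart m -> Prop) :
  (forall s, (forall r, refines (val r) (val s) -> r != s -> Q r) -> Q s) -> forall s, Q s.
Proof.
move=> H s.
suff : forall k s, msr (val s) = k -> Q s by move/(_ _ s erefl).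
elim/ltn_ind => k IH s0 hk; apply: H => r rs neq.
apply: (IH (msr (val r))) => //; rewrite -hk.
by apply: msr_lt => //; exact: valP.
Qed.

End Part.

Section Moeb.
Variable C : fieldType.
Variable m : nat.

Local Notation mo := (moebius C).
Local Notation Z := (zeta_mx C m).

Lemma sum_rank (F : 'I_#|{: setpart m}| -> C) :
  \sum_(i < #|{: setpart m}|) F i = \sum_(s : setpart m) F (enum_rank s).
Proof.
rewrite (reindex (@enum_rank (setpart m))) //.
by exists enum_val => x _; [rewrite enum_rankK | rewrite enum_valK].
Qed.

Lemma zeta_E (s p : setpart m) : Z (enum_rank s) (enum_rank p) = (refines (val s) (val p))%:R.
Proof. by rewrite mxE !enum_rankK. Qed.

Lemma spv (s : setpart m) : is_setpart (val s).
Proof. exact: valP. Qed.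

Lemma zeta_unit : Z \in unitmx.
Proof.
rewrite -row_free_unit; apply: inj_row_free => v hv; apply/rowP => i.
rewrite [RHS]mxE.
suff H : forall s, v 0 (enum_rank s) = 0 by rewrite -(enum_valK i) H.
elim/part_ind => s IH.
have : (v *m Z) 0 (enum_rank s) = 0 by rewrite hv mxE.
rewrite mxE sum_rank (bigD1 s) //= zeta_E (refines_refl (spv s)) mulr1 big1 ?addr0 //.
move=> r neq; rewrite zeta_E; case h: (refines _ _); last by rewrite mulr0.
by rewrite IH // mul0r.
Qed.

Lemma mz_sum (t s : setpart m) : \sum_(r : setpart m | refines (val r) (val s)) mo t r = (t == s)%:R.
Proof.
have H : invmx Z *m Z = 1%:M := mulVmx zeta_unit.
have := congr1 (fun M : 'M[C]_#|{: setpart m}| => M (enum_rank t) (enum_rank s)) H.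
rewrite /= !mxE sum_rank (inj_eq enum_rank_inj) => <-.
rewrite [RHS](bigID (fun r => refines (val r) (val s))) /= [X in _ = _ + X]big1 ?addr0.
  by apply: eq_bigr => r h; rewrite zeta_E h mulr1.
by move=> r h; rewrite zeta_E (negbTE h) mulr0.
Qed.

Lemma moeb_tri (s p : setpart m) : ~~ refines (val s) (val p) -> mo s p = 0.
Proof.
elim/part_ind: p => p IH ns.
have := mz_sum s p; rewrite (bigD1 p) ?(refines_refl (spv p)) //= big1 ?addr0.
  by move=> ->; case: eqP ns => // ->; rewrite (refines_refl (spv p)).
move=> r /andP [rp neq]; apply: IH => //.
by apply: contra ns => sr; apply: (refines_trans _ _ _ sr rp); apply: spv.
Qed.

Variable i0 : 'I_m.
Definition nonsing (s : setpart m) := pblock (val s) i0 != [set i0].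

Lemma moeb_vanish (f : setpart m -> C) :
  (forall s, nonsing s -> exists s', (forall r, refines (val r) (val s') =
       refines (val r) (val s) && ~~ nonsing r) /\ f s' = f s) ->
  forall p, nonsing p -> \sum_(s : setpart m | refines (val s) (val p)) f s * mo s p = 0.
Proof.
move=> Hs.
pose g p := \sum_(s : setpart m) f s * mo s p.
have gE p : \sum_(s : setpart m | refines (val s) (val p)) f s * mo s p = g p.
  rewrite /g [RHS](bigID (fun s => refines (val s) (val p))) /= [X in _ = _ + X]big1 ?addr0 //.
  by move=> s h; rewrite moeb_tri // mulr0.
have fE s : f s = \sum_(r : setpart m | refines (val r) (val s)) g r.
  rewrite /g exchange_big /=.
  rewrite (eq_bigr (fun t => f t * (t == s)%:R)); last first.
    by move=> t _; rewrite -mulr_sumr mz_sum.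
  by rewrite (bigD1 s) //= eqxx mulr1 big1 ?addr0 // => t /negbTE ->; rewrite mulr0.
move=> p np; rewrite gE; move: p np.
elim/part_ind => p IH np.
case: (Hs p np) => s' [hs' fs'].
have : \sum_(r : setpart m | refines (val r) (val p) && nonsing r) g r = 0.
  have := fE p; rewrite -fs' fE (bigID nonsing (fun r => refines (val r) (val p))) /=.
  rewrite (eq_bigl (fun r => refines (val r) (val p) && ~~ nonsing r)) => [|r]; last by rewrite hs'.
  have e : forall a b : C, a = b + a -> b = 0.
    by move=> a b /eqP; rewrite -subr_eq subrr eq_sym => /eqP.
  exact: e.
rewrite (bigD1 p) /= ?(refines_refl (spv p)) ?np // big1 ?addr0 //.
by move=> r /andP [/andP [rp nr] neq]; apply: IH.
Qed.

End Moeb.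

Definition swapn (a b x : nat) : nat := if x == a then b else if x == b then a else x.

Lemma swapn_inv a b : involutive (swapn a b).
Proof.
move=> x; rewrite /swapn.
case: (eqVneq x a) => [->|xa]; first by rewrite eqxx; case: eqVneq.
case: (eqVneq x b) => [->|xb]; first by rewrite eqxx.
by rewrite (negbTE xa) (negbTE xb).
Qed.

Section Exch.
Variable C : fieldType.
Variables (A U : algType C) (phi : A -> C) (tphi : U -> C) (iota : nat -> A -> U).
Hypothesis hE : exchangeability_system phi tphi iota.

Lemma exch_bij n (X : 'I_n -> A) (i : 'I_n -> nat) (s : nat -> nat) :
  bijective s -> mixed_moment tphi iota X i = mixed_moment tphi iota X (s \o i).
Proof. by case: hE => _ _ _ H; apply: H. Qed.

Lemma iota1 k : iota k 1 = 1.
Proof. by case: hE => _ H _ _; case: (H k). Qed.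

Lemma mm_kernel n (X : 'I_n -> A) (c1 c2 : 'I_n -> nat) :
  (forall j k, (c1 j == c1 k) = (c2 j == c2 k)) ->
  mixed_moment tphi iota X c1 = mixed_moment tphi iota X c2.
Proof.
move=> hk.
suff : forall k, (k <= n)%N -> exists c : 'I_n -> nat,
  [/\ forall j l, (c j == c l) = (c2 j == c2 l),
      mixed_moment tphi iota X c = mixed_moment tphi iota X c1 &
      forall j : 'I_n, (j < k)%N -> c j = c2 j].
  case/(_ n (leqnn n)) => c [_ <- H]; rewrite /mixed_moment; congr tphi.
  by apply: eq_bigr => j _; rewrite H.
elim=> [_|k IH lt]; first by exists c1; split.
case: (IH (ltnW lt)) => c [ck cm cagr].
pose j := Ordinal lt.
pose s := swapn (c j) (c2 j).
exists (s \o c); split.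
- move=> a b /=; rewrite (inj_eq (inv_inj (@swapn_inv _ _))); exact: ck.
- by rewrite -cm -exch_bij //; apply: inv_bij; apply: swapn_inv.
- move=> l; rewrite ltnS leq_eqVlt => /orP [/eqP lk|lk] /=.
    have -> : l = j by apply: val_inj.
    by rewrite /s /swapn eqxx.
  rewrite /s /swapn.
  case: (eqVneq (c l) (c j)) => [e|ne].
    by move/eqP: e; rewrite ck => /eqP.
  case: (eqVneq (c l) (c2 j)) => [e|ne2]; last exact: cagr.
  by move: ne; rewrite ck -(cagr _ lk) e eqxx.
Qed.

End Exch.

Lemma index_eq (T : eqType) (s : seq T) (x y : T) : x \in s -> y \in s ->
  (index x s == index y s) = (x == y).
Proof.
move=> xs ys; apply/eqP/eqP => [e|-> //].
by rewrite -(nth_index x xs) e nth_index.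
Qed.

Section Vanish.
Variable C : fieldType.
Variables (A U : algType C) (phi : A -> C) (tphi : U -> C) (iota : nat -> A -> U).
Hypothesis hE : exchangeability_system phi tphi iota.
Variable m : nat.
Variable i0 : 'I_m.

Lemma bi_lt (P : {set {set 'I_m}}) j : is_setpart P -> (block_index P j < #|{: {set 'I_m}}|)%N.
Proof.
move=> hP; apply: (@leq_trans #|P|); last exact: max_card.
by rewrite /block_index cardE index_mem mem_enum pb_mem.
Qed.

Lemma bi_eq (P : {set {set 'I_m}}) j k : is_setpart P ->
  (block_index P j == block_index P k) = (k \in pblock P j).
Proof. by move=> hP; rewrite /block_index index_eq ?mem_enum ?pb_mem // pb_eq. Qed.

Definition cmod (P : {set {set 'I_m}}) (j : 'I_m) : nat :=
  if j == i0 then #|{: {set 'I_m}}| else block_index P j.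

Lemma mm_off (Z : 'I_m -> A) (c c' : 'I_m -> nat) : Z i0 = 1 ->
  (forall j, j != i0 -> c j = c' j) ->
  mixed_moment tphi iota Z c = mixed_moment tphi iota Z c'.
Proof.
move=> Z1 H; rewrite /mixed_moment; congr tphi; apply: eq_bigr => j _.
case: (eqVneq j i0) => [->|ne]; first by rewrite Z1 !(iota1 hE).
by rewrite H.
Qed.

Lemma phi_cmod (Z : 'I_m -> A) P : Z i0 = 1 ->
  phi_part tphi iota P Z = mixed_moment tphi iota Z (cmod P).
Proof. by move=> Z1; apply: mm_off => // j ne; rewrite /cmod (negbTE ne). Qed.

Lemma Kpart_vanish (p : setpart m) (Z : 'I_m -> A) : Z i0 = 1 ->
  pblock (val p) i0 != [set i0] -> K_part tphi iota p Z = 0.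
Proof.
move=> Z1 np; rewrite /K_part.
apply: (moeb_vanish (i0 := i0) (f := fun s : setpart m => phi_part tphi iota (val s) Z)) => // s ns.
have hs := spv s.
pose F x := if x == i0 then [set i0] else pblock (val s) x :\ i0.
have Fs x : x \in F x.
  by rewrite /F; case: eqVneq => [->|ne]; rewrite ?set11 // !inE ne pb_self.
have Fe x y : y \in F x -> F y = F x.
  rewrite /F; case: (eqVneq x i0) => [_|ne]; first by rewrite inE => /eqP ->; rewrite eqxx.
  rewrite !inE => /andP [yi yx]; rewrite (negbTE yi) (pb_same hs yx) //.
case: (of_fun_part Fs Fe) => hP' pbF.
exists (exist _ (of_fun F) hP'); split.
  move=> r; have hr := spv r; rewrite /nonsing negbK /=.
  apply/idP/idP.
    move/(refinesP hr hP') => H.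
    have sub x : pblock (val r) x \subset pblock (val s) x.
      apply: subset_trans (H x) _; rewrite pbF /F.
      case: eqVneq => [->|_]; last exact: subsetDl.
      by rewrite sub1set pb_self.
    apply/andP; split; first by apply/refinesP.
    have := H i0; rewrite pbF /F eqxx => sub1.
    rewrite eqEsubset sub1 sub1set pb_self //.
  case/andP => /(refinesP hr hs) H /eqP r1; apply/refinesP => // x.
  rewrite pbF /F; case: (eqVneq x i0) => [->|ne]; first by rewrite r1.
  apply/subsetP => y yx; rewrite !inE (subsetP (H x)) // andbT.
  apply: contra_neq ne => yi; move: yx; rewrite yi => ix.
  by move: (pb_self x hr); rewrite -(pb_same hr ix) r1 inE => /eqP.
rewrite /= !phi_cmod //; apply: (mm_kernel hE) => j k.
rewrite /cmod.
case: (eqVneq j i0) => [_|nj]; case: (eqVneq k i0) => [_|nk] //.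
- by rewrite !(gtn_eqF (bi_lt _ _)).
- by rewrite ![_ == #|_|]eq_sym !(gtn_eqF (bi_lt _ _)).
rewrite !bi_eq // pbF /F (negbTE nj) !inE nk //.
Qed.

End Vanish.

Section Expand.
Variable C : fieldType.
Variables (A U : algType C) (phi : A -> C) (tphi : U -> C) (iota : nat -> A -> U).
Hypothesis hE : exchangeability_system phi tphi iota.

Lemma tphi_lin a x y : tphi (a *: x + y) = a * tphi x + tphi y.
Proof. by case: hE => [[H _]] _ _ _; apply: H. Qed.
Lemma tphi0 : tphi 0 = 0.
Proof. by have := tphi_lin 1 0 0; rewrite scale1r addr0 mul1r => /eqP; rewrite -subr_eq subrr eq_sym => /eqP. Qed.
Lemma tphiD x y : tphi (x + y) = tphi x + tphi y.
Proof. by rewrite -[x]scale1r tphi_lin mul1r !scale1r. Qed.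
Lemma tphiZ a x : tphi (a *: x) = a * tphi x.
Proof. by rewrite -[a *: x]addr0 tphi_lin tphi0 addr0. Qed.
Lemma tphi_sum (I : Type) (r : seq I) (P : pred I) (F : I -> U) :
  tphi (\sum_(i <- r | P i) F i) = \sum_(i <- r | P i) tphi (F i).
Proof. exact: (big_morph tphi tphiD tphi0). Qed.

Definition linU (T : A -> U) := forall a x y, T (a *: x + y) = a *: T x + T y.

Lemma linU0 T : linU T -> T 0 = 0.
Proof. by move=> H; have := H 1 0 0; rewrite !scale1r addr0 => /eqP; rewrite -subr_eq subrr eq_sym => /eqP. Qed.
Lemma linU_sum T (I : Type) (r : seq I) (P : pred I) (F : I -> A) : linU T ->
  T (\sum_(i <- r | P i) F i) = \sum_(i <- r | P i) T (F i).
Proof.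
move=> H; apply: (big_morph T _ (linU0 H)) => x y.
by rewrite -[x]scale1r (H 1 x y) !scale1r.
Qed.
Lemma linUZ T a x : linU T -> T (a *: x) = a *: T x.
Proof. by move=> H; rewrite -[a *: x]addr0 (H a x 0) linU0 // addr0. Qed.

Lemma iota_lin k : linU (iota k).
Proof. by case: hE => _ H _ _; case: (H k). Qed.

Lemma expand (m : nat) (T : 'I_m -> A -> U) (I : finType) (c : 'I_m -> I -> C) (W : 'I_m -> I -> A) :
  (forall j, linU (T j)) ->
  tphi (\prod_(j < m) T j (\sum_(k : I) c j k *: W j k)) =
  \sum_(J : {ffun 'I_m -> I}) (\prod_(j < m) c j (J j)) * tphi (\prod_(j < m) T j (W j (J j))).
Proof.
move=> HT.
have e j : T j (\sum_(k : I) c j k *: W j k) = \sum_(k : I) c j k *: T j (W j k).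
  by rewrite linU_sum //; apply: eq_bigr => k _; rewrite linUZ.
under eq_bigr do rewrite e.
rewrite bigA_distr_bigA tphi_sum; apply: eq_bigr => J _.
by rewrite scaler_prod tphiZ.
Qed.

Lemma Kpart_expand (m : nat) (p : setpart m) (I : finType) (c : 'I_m -> I -> C) (W : 'I_m -> I -> A) :
  K_part tphi iota p (fun j => \sum_(k : I) c j k *: W j k) =
  \sum_(J : {ffun 'I_m -> I}) (\prod_(j < m) c j (J j)) * K_part tphi iota p (fun j => W j (J j)).
Proof.
rewrite /K_part /phi_part /mixed_moment.
under eq_bigr do rewrite (expand _ _ (fun j => iota_lin _)) mulr_suml.
rewrite exchange_big /=; apply: eq_bigr => J _.
by rewrite mulr_sumr; apply: eq_bigr => s _; rewrite mulrA.
Qed.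

Lemma omega_lin (m : nat) (w : C) : linU (omega_lift iota m w).
Proof.
move=> a x y; rewrite /omega_lift scaler_sumr -big_split /=; apply: eq_bigr => k _.
by rewrite iota_lin scalerDr !scalerA mulrC.
Qed.

Lemma Komega_expand (m : nat) (w : C) (I : finType) (c : 'I_m -> I -> C) (W : 'I_m -> I -> A) :
  K_omega tphi iota w (fun j => \sum_(k : I) c j k *: W j k) =
  \sum_(J : {ffun 'I_m -> I}) (\prod_(j < m) c j (J j)) * K_omega tphi iota w (fun j => W j (J j)).
Proof.
rewrite /K_omega (expand _ _ (fun j => omega_lin m w)) mulr_sumr.
by apply: eq_bigr => J _; rewrite mulrCA.
Qed.

Lemma Komega_vanish (m : nat) (w : C) (Z : 'I_m -> A) (i0 : 'I_m) :
  m.-primitive_root w -> (2 <= m)%N -> Z i0 = 1 -> K_omega tphi iota w Z = 0.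
Proof.
move=> hw m2 Z1.
have s0 : \sum_(1 <= k < m.+1) w ^+ k = 0.
  rewrite big_add1 /= big_mkord.
  under eq_bigr do rewrite exprS.
  rewrite -mulr_sumr.
  have : (w - 1) * \sum_(i < m) w ^+ i = 0 by rewrite -subrX1 (prim_expr_order hw) subrr.
  move/eqP; rewrite mulf_eq0 => /orP [w1|/eqP ->]; last by rewrite mulr0.
  have := prim_order_dvd hw 1; rewrite expr1 -(subr_eq0 w) w1 dvdn1.
  by move=> /esym /eqP; rewrite eqn_leq leqNgt m2.
have o1 : omega_lift iota m w 1 = 0.
  rewrite /omega_lift; under eq_bigr do rewrite (iota1 hE).
  by rewrite -scaler_suml s0 scale0r.
have p0 : forall (r : seq 'I_m), i0 \in r ->
    \prod_(j <- r) omega_lift iota m w (Z j) = 0.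
  elim=> [//|a r IH]; rewrite inE big_cons => /orP [/eqP <-|ir].
    by rewrite Z1 o1 mul0r.
  by rewrite IH // mulr0.
by rewrite /K_omega p0 ?mem_index_enum // tphi0 mulr0.
Qed.

End Expand.

Section Gen.
Variable C : fieldType.
Variables (A : algType C) (m n : nat).

Lemma main_gen (Phi : ('I_m -> A) -> C) (X : 'I_n -> A) (alpha : 'I_m -> 'I_n -> C) (beta : 'I_m -> C) :
  (forall (I : finType) (c : 'I_m -> I -> C) (W : 'I_m -> I -> A),
     Phi (fun j => \sum_(k : I) c j k *: W j k) =
     \sum_(J : {ffun 'I_m -> I}) (\prod_(j < m) c j (J j)) * Phi (fun j => W j (J j))) ->
  (forall Z i0, Z i0 = 1 -> Phi Z = 0) ->
  Phi (fun i => \sum_(j < n) alpha i j *: X j + beta i *: (1 : A)) =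
  \sum_(J : {ffun 'I_m -> 'I_n}) (\prod_(i < m) alpha i (J i)) * Phi (fun i => X (J i)).
Proof.
move=> hexp hvan.
pose cb j (b : bool) := if b then 1 else beta j.
pose Wb j (b : bool) := if b then \sum_(k < n) alpha j k *: X k else 1.
have -> : (fun i => \sum_(j < n) alpha i j *: X j + beta i *: (1 : A)) =
          (fun j => \sum_(b : bool) cb j b *: Wb j b).
  by apply: functional_extensionality => j; rewrite big_bool /= scale1r.
rewrite hexp (bigD1 [ffun=> true]) //=.
rewrite [X in _ + X = _]big1 ?addr0; last first.
  move=> J neq.
  have [j0 hj0] : exists j0, ~~ J j0.
    apply/existsP; apply: contraR neq => /existsPn H; apply/eqP/ffunP => j.
    by rewrite ffunE; move: (H j); case: (J j).
  by rewrite (hvan _ j0) ?mulr0 // /Wb (negbTE hj0).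
rewrite [X in X * _ = _]big1 ?mul1r; last by move=> j _; rewrite ffunE.
have -> : (fun j => Wb j (([ffun=> true] : {ffun 'I_m -> bool}) j)) =
          (fun j => \sum_(k < n) alpha j k *: X k).
  by apply: functional_extensionality => j; rewrite ffunE.
exact: (hexp _ alpha (fun _ k => X k)).
Qed.

End Gen.

Theorem proposition3p1 (R : realType) (A : algType R[i]) (phi : A -> R[i])
  (U : algType R[i]) (tphi : U -> R[i]) (iota : nat -> A -> U)
  (hA : nc_prob_space phi)
  (hE : exchangeability_system phi tphi iota)
  (n m : nat) (X : 'I_n -> A) (alpha : 'I_m -> 'I_n -> R[i]) (beta : 'I_m -> R[i])
  (w : R[i]) (hw : m.-primitive_root w) :
  let Y := fun i : 'I_m => \sum_(j < n) alpha i j *: X j + beta i *: (1 : A) in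
  (2 <= m)%N ->
  K_omega tphi iota w Y =
    \sum_(J : {ffun 'I_m -> 'I_n})
       (\prod_(i < m) alpha i (J i)) * K_omega tphi iota w (fun i => X (J i))
  /\
  (forall p : setpart m,
     (forall B, B \in val p -> #|B| != 1%N) ->
     K_part tphi iota p Y =
       \sum_(J : {ffun 'I_m -> 'I_n})
          (\prod_(i < m) alpha i (J i)) * K_part tphi iota p (fun i => X (J i))).
Proof.
move=> Y m2; split.
  apply: main_gen.
    by move=> I c W; apply: (Komega_expand hE).
  by move=> Z i0 Z1; apply: (Komega_vanish hE hw m2 Z1).
move=> p hp; apply: main_gen.
  by move=> I c W; apply: (Kpart_expand hE).
move=> Z i0 Z1; apply: (Kpart_vanish hE Z1).
apply/negP => /eqP e; have := hp _ (pb_mem i0 (spv p)); by rewrite e cards1.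
Qed.
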